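(* Let $C$ be a linear code over $\mathbb{Z}_4$ of type $4^{k_1}2^{k_2}$ and length $n$ which is projective, Plotkin-optimal, and has exactly two distinct nonzero Lee weights. Then there is an integer $t$ with $1\le t\le k_1$ such that $$n=d_L(C)=2^{2k_1+k_2-1}-2^{2k_1+k_2-t-1}.$$ Moreover, the nonzero Lee weights of $C$ are $w_1=2^{2k_1+k_2-1}-2^{2k_1+k_2-t-1}$ and $w_2=2^{2k_1+k_2-1}$, and $A_{w_1}=2^{2k_1+k_2}-2^t$, $A_{w_2}=2^t-1$.
   Context: A linear code of length $n$ over $\mathbb{Z}_4$ is a $\mathbb{Z}_4$-submodule of $\mathbb{Z}_4^n$; it has type $4^{k_1}2^{k_2}$ if it is isomorphic as a group to $\mathbb{Z}_4^{k_1}\times\mathbb{Z}_2^{k_2}$ (so $|C|=4^{k_1}2^{k_2}$). The Lee weight on $\mathbb{Z}_4$ is $w_L(0)=0,w_L(1)=1,w_L(2)=2,w_L(3)=1$, extended additively to vectors; $d_L(C)$ is the minimum Lee weight of a nonzero codeword. $C$ is Plotkin-optimal if $d_L(C)=\lfloor \frac{|C|}{|C|-1}n\rfloor$. The dual $C^\perp$ is taken with respect to the inner product $\mathbf{x}\cdot\mathbf{y}=\sum x_iy_i\in\mathbb{Z}_4$, and $C$ is projective if $d_L(C^\perp)\ge 3$. $A_w$ denotes the number of codewords of $C$ of Lee weight $w$. *)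

(* Defs.v *)
From HB Require Import structures.
From mathcomp Require Import all_boot all_order all_algebra.
Set Implicit Arguments. Unset Strict Implicit. Unset Printing Implicit Defensive.
Import GRing.Theory.
Local Open Scope ring_scope.

Definition linear_code (n : nat) (C : {set 'rV['Z_4]_n}) : Prop :=
  [/\ (0 : 'rV['Z_4]_n) \in C,
      (forall x y, x \in C -> y \in C -> x + y \in C) &
      (forall (a : 'Z_4) x, x \in C -> a *: x \in C)].

(* C has type 4^k1 2^k2 : C is isomorphic as a group to Z4^k1 x Z2^k2 *)
Definition code_type (n k1 k2 : nat) (C : {set 'rV['Z_4]_n}) : Prop :=
  exists f : 'rV['Z_4]_k1 * 'rV['Z_2]_k2 -> 'rV['Z_4]_n,
    [/\ (forall u v, f (u + v) = f u + f v), injective f &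
        forall x, (x \in C) <-> (exists u, x = f u)].

Definition leeZ4 (a : 'Z_4) : nat := minn (val a) (4 - val a).
Definition leeW (n : nat) (x : 'rV['Z_4]_n) : nat := (\sum_(i < n) leeZ4 (x ord0 i))%N.

(* minimum Lee distance; for the zero code it is a value exceeding every
   possible Lee weight (playing the role of +infinity) *)
Definition dL (n : nat) (C : {set 'rV['Z_4]_n}) : nat :=
  (\big[minn/(n.*2).+3]_(x in C | x != 0%R) leeW x)%N.

Definition dotZ4 (n : nat) (x y : 'rV['Z_4]_n) : 'Z_4 := \sum_(i < n) x ord0 i * y ord0 i.

Definition dual_code (n : nat) (C : {set 'rV['Z_4]_n}) : {set 'rV['Z_4]_n} :=
  [set y | [forall x in C, dotZ4 x y == 0]].

Definition projective (n : nat) (C : {set 'rV['Z_4]_n}) : Prop :=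
  (3 <= dL (dual_code C))%N.

Definition plotkin_optimal (n : nat) (C : {set 'rV['Z_4]_n}) : Prop :=
  dL C = ((#|C| * n) %/ (#|C| - 1))%N.

Definition lee_weights (n : nat) (C : {set 'rV['Z_4]_n}) : seq nat :=
  undup [seq leeW x | x <- enum (C :\ 0)].

Definition weight_count (n : nat) (C : {set 'rV['Z_4]_n}) (w : nat) : nat :=
  #|[set x in C | leeW x == w]|.

(* Main.v *)
Require Import Defs.
From mathcomp Require Import all_boot all_order all_algebra.
From HB Require Import structures.
From mathcomp Require Import zify ring lra.
Set Implicit Arguments. Unset Strict Implicit. Unset Printing Implicit Defensive.
Import GRing.Theory Num.Theory.

Section Aux.
Local Open Scope ring_scope.

Definition cz (a : 'Z_4) : int := match val a with 0%N => 1 | 2%N => -1 | _ => 0 end.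

Lemma cz_prod (a b : 'Z_4) : 2 * cz a * cz b = cz (a+b) + cz (a-b).
Proof. by case: a => -[|[|[|[|?]]]] //= Ha; case: b => -[|[|[|[|?]]]]. Qed.

Lemma cz_add2 (a : 'Z_4) : cz (a + 2) = - cz a.
Proof. by case: a => -[|[|[|[|?]]]]. Qed.

Lemma cz_le1 (a : 'Z_4) : cz a <= 1.
Proof. by case: a => -[|[|[|[|?]]]]. Qed.

Lemma cz_eq1 (a : 'Z_4) : cz a = 1 -> a = 0.
Proof. by case: a => -[|[|[|[|?]]]] //= Ha _; apply: val_inj. Qed.

Lemma cz0 : cz 0 = 1. Proof. by []. Qed.

Lemma lee_cz (a : 'Z_4) : (leeZ4 a)%:Z = 1 - cz a.
Proof. by case: a => -[|[|[|[|?]]]]. Qed.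

Lemma z4_dbl (a : 'Z_4) : a != 0 -> a = 2 \/ a + a = 2.
Proof. by case: a => -[|[|[|[|?]]]] //= Ha _; [right|left|right]; apply: val_inj. Qed.

Lemma z4_odd_neq0 (a : 'Z_4) : odd (val a) -> a != 0.
Proof. by case: a => -[|[|[|[|?]]]]. Qed.

Lemma z4_odd_add_even (a b : 'Z_4) : odd (val a) -> ~~ odd (val b) -> odd (val (a + b)) && odd (val (a - b)).
Proof. by case: a => -[|[|[|[|?]]]] //= Ha; case: b => -[|[|[|[|?]]]]. Qed.

Lemma z4_odd_dbl (a : 'Z_4) : odd (val a) -> a + a != 0.
Proof. by case: a => -[|[|[|[|?]]]]. Qed.

Lemma z4_dbl_even (a : 'Z_4) : ~~ odd (val (a + a)).
Proof. by case: a => -[|[|[|[|?]]]]. Qed.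

Definition h2 (b : 'Z_2) : 'Z_4 := if b == 0 then 0 else 2.
Lemma h2_add (a b : 'Z_2) : h2 (a + b) = h2 a + h2 b.
Proof. by case: a => -[|[|?]] //= Ha; case: b => -[|[|?]] //= Hb; apply: val_inj. Qed.
Lemma h2_even (a : 'Z_2) : ~~ odd (val (h2 a)).
Proof. by case: a => -[|[|?]]. Qed.

Lemma bigmin_le (I : finType) (P : pred I) (F : I -> nat) x0 i :
  P i -> (\big[minn/x0]_(j | P j) F j <= F i)%N.
Proof.
move=> Pi; rewrite -big_filter.
have: i \in [seq j <- index_enum I | P j] by rewrite mem_filter Pi mem_index_enum.
elim: [seq j <- index_enum I | P j] => // a s IH; rewrite big_cons inE.
case/orP => [/eqP<- | /IH h]; first exact: geq_minl.
exact: leq_trans (geq_minr _ _) h.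
Qed.

Lemma z4_dd_eq (a b : 'Z_4) : a + a = 0 -> b + b = 0 -> (a == 2) = (b == 2) -> a = b.
Proof.
case: a => -[|[|[|[|?]]]] //= Ha; case: b => -[|[|[|[|?]]]] //= Hb _ _ _; exact: val_inj.
Qed.

Lemma h2_eq0 (b : 'Z_2) : h2 b = 0 -> b = 0.
Proof. by case: b => -[|[|?]] //= Hb _; apply: val_inj. Qed.

Lemma cardG k1 k2 : #|{: ('rV['Z_4]_k1 * 'rV['Z_2]_k2)%type}| = (2 ^ (2 * k1 + k2))%N.
Proof. rewrite card_prod !card_mx !card_ord /= !mul1n expnD expnM. by []. Qed.

Lemma z4_even_mul2 (a : 'Z_4) : ~~ odd (val a) -> a * 2 = 0.
Proof. by case: a => -[|[|[|[|?]]]] //= Ha _; apply: val_inj. Qed.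

Lemma leeZ4_m1 : leeZ4 (-1) = 1%N.
Proof. by []. Qed.

End Aux.

Section Main.
Local Open Scope ring_scope.
Variables (n k1 k2 : nat).
Notation G := ('rV['Z_4]_k1 * 'rV['Z_2]_k2)%type.

Lemma sum_cz0 (f : G -> 'Z_4) : (forall u v, f (u+v) = f u + f v) ->
  (exists v, f v != 0) -> \sum_(u : G) cz (f u) = 0.
Proof.
move=> hf [v hv].
have [w hw] : exists w, f w = 2.
  case: (z4_dbl hv) => h; [exists v | exists (v+v); rewrite hf]; exact: h.
have e : \sum_(u : G) cz (f u) = - \sum_(u : G) cz (f u).
  rewrite {1}(reindex_inj (addIr w)) /= -sumrN; apply: eq_bigr => u _.
  by rewrite hf hw cz_add2.
lia.
Qed.

Lemma sum_cz_prod (f1 f2 : G -> 'Z_4) :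
  2 * \sum_(u : G) cz (f1 u) * cz (f2 u) =
  \sum_(u : G) cz (f1 u + f2 u) + \sum_(u : G) cz (f1 u - f2 u).
Proof.
rewrite mulr_sumr -big_split; apply: eq_bigr => u _; by rewrite mulrA cz_prod.
Qed.

Variable F : G -> 'rV['Z_4]_n.
Hypothesis Fadd : forall u v, F (u + v) = F u + F v.

Definition phi (j : 'I_n) (u : G) : 'Z_4 := F u ord0 j.
Definition gg (u : G) : int := \sum_(j < n) cz (phi j u).

Lemma phi_add j u v : phi j (u + v) = phi j u + phi j v.
Proof. by rewrite /phi Fadd mxE. Qed.

Lemma F0 : F 0 = 0.
Proof. by apply: (addrI (F 0)); rewrite -Fadd !addr0. Qed.

Lemma phi0 j : phi j 0 = 0.
Proof. by rewrite /phi F0 mxE. Qed.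

Lemma gg0 : gg 0 = n%:Z.
Proof.
rewrite /gg (eq_bigr (fun _ => 1)) => [|j _]; last by rewrite phi0.
by rewrite sumr_const card_ord natz.
Qed.

Lemma leeW_gg u : (leeW (F u))%:Z = n%:Z - gg u.
Proof.
rewrite /leeW (big_morph _ PoszD (erefl 0%:Z)).
rewrite (eq_bigr (fun j => 1 - cz (phi j u))) => [|j _]; last by rewrite lee_cz.
by rewrite sumrB sumr_const card_ord natz.
Qed.

Hypothesis hodd : forall j, exists u, odd (val (phi j u)).
Hypothesis hpm : forall j l, j != l ->
  (exists u, phi j u + phi l u != 0) /\ (exists u, phi j u - phi l u != 0).

Lemma addP j l : forall u v, (fun w => phi j w + phi l w) (u + v) =
   (fun w => phi j w + phi l w) u + (fun w => phi j w + phi l w) v.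
Proof. by move=> u v /=; rewrite !phi_add addrACA. Qed.

Lemma subP (f1 f2 : G -> 'Z_4) : (forall u v, f1 (u + v) = f1 u + f1 v) ->
  (forall u v, f2 (u + v) = f2 u + f2 v) ->
  forall u v, (fun w => f1 w - f2 w) (u + v) =
   (fun w => f1 w - f2 w) u + (fun w => f1 w - f2 w) v.
Proof. by move=> h1 h2 u v /=; rewrite h1 h2 opprD addrACA. Qed.

Lemma addP' (f1 f2 : G -> 'Z_4) : (forall u v, f1 (u + v) = f1 u + f1 v) ->
  (forall u v, f2 (u + v) = f2 u + f2 v) ->
  forall u v, (fun w => f1 w + f2 w) (u + v) =
   (fun w => f1 w + f2 w) u + (fun w => f1 w + f2 w) v.
Proof. by move=> h1 h2 u v /=; rewrite h1 h2 addrACA. Qed.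

Lemma S1 : \sum_(u : G) gg u = 0.
Proof.
rewrite /gg exchange_big big1 // => j _; apply: sum_cz0; first exact: phi_add.
by case: (hodd j) => u hu; exists u; apply: z4_odd_neq0.
Qed.

Lemma S2 : 2 * \sum_(u : G) gg u ^+ 2 = (n * #|{: G}|)%:Z.
Proof.
have -> : \sum_(u : G) gg u ^+ 2 =
   \sum_(j < n) \sum_(l < n) \sum_(u : G) cz (phi j u) * cz (phi l u).
  rewrite (eq_bigr (fun u => \sum_(j < n) \sum_(l < n) cz (phi j u) * cz (phi l u))).
    by rewrite exchange_big; apply: eq_bigr => j _; rewrite exchange_big.
  move=> u _; rewrite expr2 /gg mulr_suml; apply: eq_bigr => j _.
  by rewrite mulr_sumr.
rewrite mulr_sumr (eq_bigr (fun _ => #|{: G}|%:Z)) => [|j _].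
  by rewrite sumr_const card_ord -mulr_natl natz PoszM.
rewrite mulr_sumr (bigD1 j) //= [X in _ + X]big1 ?addr0 => [|l hl].
  rewrite sum_cz_prod.
  rewrite (sum_cz0 (addP j j)); last first.
    by case: (hodd j) => u hu; exists u; apply: z4_odd_dbl.
  rewrite (eq_bigr (fun _ => 1)) => [|u _]; last by rewrite subrr.
  by rewrite sumr_const add0r natz.
rewrite sum_cz_prod.
have hl' : j != l by rewrite eq_sym.
case: (hpm hl') => h1 h2.
rewrite (sum_cz0 (addP j l)) ?(sum_cz0 (subP (@phi_add j) (@phi_add l))) ?addr0 //.
Qed.


Lemma S3 (psi : G -> 'Z_4) : (forall u v, psi (u+v) = psi u + psi v) ->
  (forall u, ~~ odd (val (psi u))) -> \sum_(u : G) gg u * cz (psi u) = 0.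
Proof.
move=> hadd hev.
have : 2 * \sum_(u : G) gg u * cz (psi u) = 0; last by lia.
rewrite (eq_bigr (fun u => \sum_(j < n) cz (phi j u) * cz (psi u))) => [|u _]; last first.
  by rewrite /gg mulr_suml.
rewrite exchange_big mulr_sumr big1 // => j _.
rewrite sum_cz_prod.
case: (hodd j) => u hu.
have /andP [o1 o2] := z4_odd_add_even hu (hev u).
rewrite (sum_cz0 (addP' (@phi_add j) hadd)) ?(sum_cz0 (subP (@phi_add j) hadd)) ?addr0 //.
  by exists u; apply: z4_odd_neq0.
by exists u; apply: z4_odd_neq0.
Qed.


Hypothesis Finj : injective F.

Definition W (u : G) : nat := leeW (F u).

Lemma leeW0 : leeW (0 : 'rV['Z_4]_n) = 0%N.
Proof. by rewrite /leeW big1 // => i _; rewrite mxE. Qed.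

Lemma W0 : W 0 = 0%N.
Proof. by rewrite /W F0 leeW0. Qed.

Lemma Wgg u : gg u = n%:Z - (W u)%:Z.
Proof. rewrite /W leeW_gg; lia. Qed.

Lemma sum_if0 (c : int) : \sum_(u : G) (if u == 0 then c else 0) = c.
Proof. by rewrite -big_mkcond big_pred1_eq. Qed.

Lemma sum_ifQ (Q : {set G}) (c : int) :
  \sum_(u : G) (if u \in Q then c else 0) = c *+ #|Q|.
Proof. by rewrite -big_mkcond sumr_const. Qed.

Variables p q : nat.
Hypothesis hpq : (p < q)%N.
Hypothesis hw : forall u, u != 0 -> W u = p \/ W u = q.
Variables up uq : G.
Hypothesis hup : up != 0 /\ W up = p.
Hypothesis huq : uq != 0 /\ W uq = q.
Hypothesis hD : forall u, u != 0 -> ((#|{: G}| * n) %/ (#|{: G}| - 1) <= W u)%N.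

Lemma N3 : (3 <= #|{: G}|)%N.
Proof.
have : (1 < #|predC1 (0%R : G)|)%N.
  apply/card_gt1P; exists up, uq; split.
  - by rewrite !inE; case: hup.
  - by rewrite !inE; case: huq.
  apply/eqP => e; case: hup => _; case: huq => _; rewrite e; lia.
rewrite cardC1 => h; have h2 : (1 < #|{: G}|.-1)%N by exact: h. lia.
Qed.

Lemma n_small : (n < #|{: G}| - 1)%N.
Proof.
have h1 : (gg 0) ^+ 2 <= \sum_(u : G) gg u ^+ 2.
  rewrite (bigD1 (0 : G)) //= lerDl sumr_ge0 // => u _; exact: sqr_ge0.
have h2 := S2; rewrite gg0 in h1.
have h3 : (n * (2 * n) <= n * #|{: G}|)%N by move: h1 h2; rewrite expr2; lia.
have h4 := N3.
case: n h3 => [|m]; first lia.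
rewrite leq_pmul2l //; lia.
Qed.

Lemma D_n : ((#|{: G}| * n) %/ (#|{: G}| - 1) = n)%N.
Proof.
have h := n_small; have h3 := N3.
have -> : (#|{: G}| * n = n * (#|{: G}| - 1) + n)%N.
  rewrite mulnBr muln1 mulnC subnK //; rewrite leq_pmulr //; lia.
by rewrite divnMDl ?divn_small ?addn0 //; lia.
Qed.

Lemma Wge u : u != 0 -> (n <= W u)%N.
Proof. by move=> /hD; rewrite D_n. Qed.

Lemma p_n : p = n.
Proof.
have hp : (n <= p)%N by case: hup => h1 <-; exact: Wge.
case: (ltnP n p) => hnp; last lia.
have hle : forall u : G, gg u <= (if u == 0 then (n.+1)%:Z else 0) - 1.
  move=> u; case: eqP => [->|/eqP hu]; first by rewrite gg0; lia.
  rewrite Wgg; case: (hw hu) => ->; lia.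
have : \sum_(u : G) gg u <= \sum_(u : G) ((if u == 0 then (n.+1)%:Z else 0) - 1).
  by apply: ler_sum => u _; exact: hle u.
rewrite S1 sumrB sum_if0 sumr_const.
have h := n_small; move=> hh; exfalso.
have : (#|{: G}| <= n.+1)%N.
  move: hh; rewrite natz => hh.
  have hh2 : (0 <= (n.+1)%:Z - (#|{: G}|)%:Z) := hh. lia.
lia.
Qed.

Definition Q := [set u : G | W u == q].
Definition bb := (q - n)%N.

Lemma notQ0 : (0 : G) \notin Q.
Proof. rewrite inE W0; apply/eqP => e; move: hpq; rewrite -e; lia. Qed.

Lemma gg_dec u : gg u = (if u == 0 then n%:Z else 0) - (if u \in Q then bb%:Z else 0).
Proof.
case: eqP => [->|/eqP hu]; first by rewrite (negbTE notQ0) gg0 subr0.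
rewrite Wgg inE /bb; have := p_n; case: (hw hu) => -> e.
  have := hpq; rewrite e; case: eqP; lia.
have := hpq; rewrite e; case: eqP; lia.
Qed.

Lemma gg_dec2 u : gg u ^+ 2 = (if u == 0 then (n * n)%:Z else 0) + (if u \in Q then (bb * bb)%:Z else 0).
Proof.
rewrite gg_dec; case: eqP => [->|_]; first by rewrite (negbTE notQ0) expr2; nia.
by case: ifP => _; rewrite expr2; nia.
Qed.

Lemma Posz_mulrn (a m : nat) : (a%:Z) *+ m = (a * m)%N%:Z.
Proof. by rewrite -mulr_natr natz -PoszM. Qed.

Lemma eqA : (bb * #|Q| = n)%N.
Proof.
have := S1; rewrite (eq_bigr _ (fun u _ => gg_dec u)) sumrB sum_if0 sum_ifQ.
rewrite -mulr_natl natz -PoszM => /eqP; rewrite subr_eq0 => /eqP [->]; exact: mulnC.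
Qed.

Lemma eqN : (2 * (n * n + bb * bb * #|Q|) = n * #|{: G}|)%N.
Proof.
have := S2; rewrite (eq_bigr _ (fun u _ => gg_dec2 u)) big_split /= sum_if0 sum_ifQ.
rewrite Posz_mulrn -PoszD -mulr_natl natz -PoszM => -[h]; rewrite -h; by rewrite muln1.
Qed.

Lemma Qpos : (0 < #|Q|)%N.
Proof. apply/card_gt0P; exists uq; rewrite inE; case: huq => _ ->. by []. Qed.

Lemma bpos : (0 < bb)%N.
Proof. rewrite /bb -p_n; lia. Qed.

Lemma eqN2 : (2 * n + 2 * bb = #|{: G}|)%N.
Proof.
have h1 := eqA; have h2 := eqN; have h3 := Qpos; have h4 := bpos.
have hn : (0 < n)%N by rewrite -h1 muln_gt0 h3 h4.
have : (n * (2 * n + 2 * bb) = n * #|{: G}|)%N.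
  rewrite -h2 -mulnA h1; ring.
by move/eqP; rewrite eqn_pmul2l // => /eqP.
Qed.

Lemma psi_Q (psi : G -> 'Z_4) : (forall u v, psi (u+v) = psi u + psi v) ->
  (forall u, ~~ odd (val (psi u))) -> forall u, u \in Q -> psi u = 0.
Proof.
move=> hadd hev.
have psi0 : psi 0 = 0 by apply: (addrI (psi 0)); rewrite -hadd !addr0.
have := S3 hadd hev.
rewrite (eq_bigr (fun u => (if u == 0 then n%:Z * cz (psi u) else 0)
    - (if u \in Q then bb%:Z * cz (psi u) else 0))); last first.
  by move=> u _; rewrite gg_dec mulrBl; case: ifP; case: ifP; rewrite ?mul0r.
rewrite sumrB -big_mkcond big_pred1_eq psi0 cz0 mulr1 -big_mkcond /= -mulr_sumr.
move=> e.
have e2 : \sum_(u in Q) (1 - cz (psi u)) = 0.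
  rewrite sumrB sumr_const.
  have hb : bb%:Z != 0 by have := bpos; lia.
  apply: (mulfI hb); rewrite mulr0 mulrBr.
  have -> : bb%:Z * (1 *+ #|Q|) = n%:Z by rewrite -eqA -mulr_natl natz mulr1 PoszM.
  exact: e.
move=> u uQ; apply: cz_eq1.
have hnn : forall i, i \in Q -> 0 <= 1 - cz (psi i).
  by move=> i _; rewrite subr_ge0 cz_le1.
have := psumr_eq0P hnn e2 uQ; lia.
Qed.


Lemma psi_Q0 (psi : G -> 'Z_4) : (forall u v, psi (u+v) = psi u + psi v) ->
  (forall u, ~~ odd (val (psi u))) -> forall u, u \in ((0%R : G) |: Q) -> psi u = 0.
Proof.
move=> hadd hev u; rewrite in_setU1 => /orP [/eqP ->|uQ]; last exact: psi_Q.
by apply: (addrI (psi 0)); rewrite -hadd !addr0.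
Qed.

Lemma Q_bound : (#|Q| + 1 <= 2 ^ k1)%N.
Proof.
have h1 : forall i u, u \in ((0%R : G) |: Q) -> u.1 ord0 i + u.1 ord0 i = 0.
  move=> i; apply: (psi_Q0 (psi := fun u : G => u.1 ord0 i + u.1 ord0 i)).
    by move=> u v /=; rewrite mxE addrACA.
  by move=> u; apply: z4_dbl_even.
have h2' : forall j u, u \in ((0%R : G) |: Q) -> h2 (u.2 ord0 j) = 0.
  move=> j; apply: (psi_Q0 (psi := fun u : G => h2 (u.2 ord0 j))).
    by move=> u v /=; rewrite mxE h2_add.
  by move=> u; apply: h2_even.
have : (#|(0%R : G) |: Q| <= #|{: {ffun 'I_k1 -> bool}}|)%N.
  apply: (@leq_card_in _ _ (fun u : G => [ffun i => u.1 ord0 i == 2])).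
  move=> u v hu hv /ffunP e.
  case: u hu e => [a1 b1] hu; case: v hv => [a2 b2] hv e.
  congr pair; apply/rowP => i.
    have := e i; rewrite !ffunE => e'.
    apply: z4_dd_eq e'; [exact: (h1 i _ hu) | exact: (h1 i _ hv)].
  by rewrite (h2_eq0 (h2' i _ hu)) (h2_eq0 (h2' i _ hv)).
by rewrite card_ffun card_bool card_ord cardsU1 notQ0 addnC.
Qed.

Lemma core : [/\ p = n, (2 * n + 2 * bb = #|{: G}|)%N, (bb * #|Q| = n)%N,
   (#|Q| + 1 <= 2 ^ k1)%N &
   (#|[set u : G | W u == n]| + #|Q| + 1 = #|{: G}|)%N].
Proof.
split; [exact: p_n | exact: eqN2 | exact: eqA | exact: Q_bound |].
have e : [set u : G | W u == n] = ~: ((0%R : G) |: Q).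
  apply/setP => u; rewrite /Q !inE.
  have hn : (0 < n)%N by rewrite -eqA muln_gt0 Qpos bpos.
  case: (eqVneq u 0) => [->|hu]; first by rewrite W0 /=; apply: negbTE; apply/eqP; lia.
  have := p_n; case: (hw hu) => -> e; rewrite /=.
    have -> : (p == n) = true by apply/eqP.
    by have -> : (p == q) = false by apply: negbTE; apply/eqP; move: hpq; lia.
  have -> : (q == q) = true by apply/eqP.
  by have -> : (q == n) = false by apply: negbTE; apply/eqP; move: hpq; lia.
have c : (#|(0%R : G) |: Q| + #|~: ((0%R : G) |: Q)| = #|{: G}|)%N := cardsC _.
rewrite cardsU1 notQ0 in c; rewrite e; lia.
Qed.

Lemma core2 : ((#|{: G}| * n) %/ (#|{: G}| - 1) = n)%N /\ (0 < #|Q|)%N.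
Proof. split; [exact: D_n | exact: Qpos]. Qed.

End Main.

Section Rows.
Local Open Scope ring_scope.
Variable n : nat.

Definition ydef (j l : 'I_n) (a b : 'Z_4) : 'rV['Z_4]_n :=
  \row_i ((if i == j then a else 0) + (if i == l then b else 0)).

Lemma sum_pick (f : 'I_n -> 'Z_4) j a :
  \sum_i f i * (if i == j then a else 0) = f j * a.
Proof.
rewrite (bigD1 j) //= eqxx [X in _ + X]big1 ?addr0 // => i /negbTE ->.
by rewrite mulr0.
Qed.

Lemma dot_y (x : 'rV['Z_4]_n) j l a b :
  dotZ4 x (ydef j l a b) = x ord0 j * a + x ord0 l * b.
Proof.
rewrite /dotZ4 (eq_bigr (fun i => x ord0 i * (if i == j then a else 0)
   + x ord0 i * (if i == l then b else 0))) => [|i _]; last by rewrite mxE mulrDr.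
by rewrite big_split /= !sum_pick.
Qed.

Lemma leeW_y1 j a : leeW (ydef j j a 0) = leeZ4 a.
Proof.
rewrite /leeW (bigD1 j) //= mxE eqxx addr0 big1 ?addn0 // => i /negbTE hi.
by rewrite mxE hi addr0.
Qed.

Lemma leeW_y2 j l a b : j != l -> leeW (ydef j l a b) = (leeZ4 a + leeZ4 b)%N.
Proof.
move=> hjl; rewrite /leeW (bigD1 j) //= (bigD1 l) /=; last by rewrite eq_sym.
rewrite !mxE eqxx (negbTE hjl) eq_sym (negbTE hjl) eqxx addr0 add0r.
rewrite big1 ?addn0 // => i /andP [hi1 hi2].
by rewrite mxE (negbTE hi1) (negbTE hi2) addr0.
Qed.

End Rows.

Lemma numeric (n q A bq k1 K t : nat) : (k1 <= K)%N ->
  (n < q)%N -> bq = (q - n)%N -> (bq * A = n)%N -> (A + 1 <= 2 ^ k1)%N -> (0 < A)%N ->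
  (2 * n + 2 * bq = 2 ^ K)%N -> A.+1 = (2 ^ t)%N ->
  [/\ (1 <= t <= k1)%N, n = (2 ^ (K - 1) - 2 ^ (K - t - 1))%N,
      q = (2 ^ (K - 1))%N, A = (2 ^ t - 1)%N &
      (2 ^ K - A - 1 = 2 ^ K - 2 ^ t)%N].
Proof.
move=> hkK hnq hbq hA hQ hQpos hN hAt.
have h2 : (2 * bq * 2 ^ t = 2 ^ K)%N by rewrite -hAt -hN -hA; ring.
have ht1 : (1 <= t)%N.
  by case: t hAt h2 => // hAt; move: hAt; rewrite expn0 => -[h]; move: hQpos; rewrite h.
have htk1 : (t <= k1)%N.
  by rewrite -(leq_exp2l _ _ (isT : (1 < 2)%N)) -hAt; lia.
have htk : (t <= K)%N by lia.
have hk : (2 ^ K = 2 ^ (K - t) * 2 ^ t)%N by rewrite -expnD subnK.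
have h3 : (2 * bq = 2 ^ (K - t))%N.
  by apply/eqP; rewrite -(eqn_pmul2r (expn_gt0 2 t)) h2 -hk.
have hbpos : (0 < bq)%N by rewrite hbq; lia.
have hkt : (0 < K - t)%N.
  by move: h3; case: (K - t)%N => //; rewrite expn0; lia.
have [e he] : exists e, K = (t + e.+1)%N by exists (K - t - 1)%N; lia.
have e1 : (K - 1 = t + e)%N by lia.
have e2 : (K - t - 1 = e)%N by lia.
have e3 : (K - t = e.+1)%N by lia.
rewrite e3 expnS in h3.
rewrite e1 e2 he addnS expnS expnD.
rewrite he addnS expnS expnD in hN.
move: hAt h3 hN; move: (2 ^ t)%N (2 ^ e)%N (expn_gt0 2 t) => X Y hX hAt h3 hN.
have hXY : (Y <= X * Y)%N by rewrite leq_pmull.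
have hAX : A = (X - 1)%N by lia.
have hbqe : bq = Y by lia.
have hn : n = (X * Y - Y)%N by rewrite -hA hbqe hAX mulnBr muln1 mulnC.
split => //; lia.
Qed.

Unset Implicit Arguments.

Theorem theorem4p6 (n k1 k2 : nat) (C : {set 'rV['Z_4]_n}) :
  linear_code C -> code_type k1 k2 C -> projective C -> plotkin_optimal C ->
  size (lee_weights C) = 2 ->
  exists t : nat,
    [/\ (1 <= t <= k1)%N,
        n = dL C /\ dL C = (2 ^ (2 * k1 + k2 - 1) - 2 ^ (2 * k1 + k2 - t - 1))%N,
        (forall w, w \in lee_weights C <->
           (w = 2 ^ (2 * k1 + k2 - 1) - 2 ^ (2 * k1 + k2 - t - 1) \/
            w = 2 ^ (2 * k1 + k2 - 1))%N),
        weight_count C (2 ^ (2 * k1 + k2 - 1) - 2 ^ (2 * k1 + k2 - t - 1))%N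
          = (2 ^ (2 * k1 + k2) - 2 ^ t)%N &
        weight_count C (2 ^ (2 * k1 + k2 - 1))%N = (2 ^ t - 1)%N].
Proof.
move=> _ [F [Fadd Finj FC]] hproj hplot hsize.
have F0' := F0 Fadd.
have Fnz : forall u, (F u != 0%R) = (u != 0%R).
  move=> u; apply/idP/idP; apply: contra => /eqP h; apply/eqP.
    by rewrite h F0'.
  by apply: Finj; rewrite h F0'.
have eC : C = F @: [set: ('rV['Z_4]_k1 * 'rV['Z_2]_k2)%type].
  apply/setP => x; apply/idP/imsetP => [/FC [u ->]|[u _ ->]].
    by exists u.
  by apply/FC; exists u.
have cardC : #|C| = #|{: ('rV['Z_4]_k1 * 'rV['Z_2]_k2)%type}|.
  by rewrite eC card_imset // cardsT.
have lw : forall w, w \in lee_weights C <-> exists u, u != 0%R /\ W F u = w.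
  move=> w; rewrite /lee_weights mem_undup; split.
    case/mapP => x; rewrite mem_enum in_setD1 => /andP [hx0 hxC] ->.
    case: ((FC x).1 hxC) => u hu; exists u; split; last by rewrite /W hu.
    by rewrite -Fnz -hu.
  case=> u [hu <-]; apply/mapP; exists (F u) => //.
  by rewrite mem_enum in_setD1 Fnz hu /=; apply/FC; exists u.
have dLle : forall x, x \in C -> x != 0%R -> (dL C <= leeW x)%N.
  by move=> x hx hx0; apply: (bigmin_le (P := fun x => (x \in C) && (x != 0%R))); rewrite hx hx0.
have proj3 : forall y, (forall u, dotZ4 (F u) y = 0%R) -> y != 0%R -> (3 <= leeW y)%N.
  move=> y hy hy0; apply: leq_trans hproj _.
  apply: (bigmin_le (P := fun x => (x \in dual_code C) && (x != 0%R))).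
  rewrite hy0 andbT inE; apply/forallP => x; apply/implyP => /FC [u ->].
  by rewrite hy.
have hodd : forall j, exists u, odd (val (phi F j u)).
  move=> j; case: (boolP [exists u, odd (val (phi F j u))]) => [/existsP //|].
  rewrite negb_exists => /forallP hall; exfalso.
  have hy0 : ydef j j 2%R 0%R != 0%R.
    by apply/eqP => e; have := leeW_y1 j 2%R; rewrite e leeW0.
  have hd : forall u, dotZ4 (F u) (ydef j j 2%R 0%R) = 0%R.
    by move=> u; rewrite dot_y GRing.mulr0 GRing.addr0; apply: z4_even_mul2; apply: hall.
  by have := proj3 _ hd hy0; rewrite leeW_y1.
have hpm : forall j l, j != l ->
  (exists u, (phi F j u + phi F l u != 0)%R) /\ (exists u, (phi F j u - phi F l u != 0)%R).
  move=> j l hjl; split.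
    case: (boolP [exists u, (phi F j u + phi F l u != 0)%R]) => [/existsP //|].
    rewrite negb_exists => /forallP hall; exfalso.
    have hy0 : ydef j l 1%R 1%R != 0%R.
      by apply/eqP => e; have := leeW_y2 1%R 1%R hjl; rewrite e leeW0.
    have hd : forall u, dotZ4 (F u) (ydef j l 1%R 1%R) = 0%R.
      move=> u; rewrite dot_y !GRing.mulr1; apply/eqP.
      by have := hall u; rewrite negbK.
    by have := proj3 _ hd hy0; rewrite leeW_y2.
  case: (boolP [exists u, (phi F j u - phi F l u != 0)%R]) => [/existsP //|].
  rewrite negb_exists => /forallP hall; exfalso.
  have hy0 : ydef j l 1%R (-1)%R != 0%R.
    by apply/eqP => e; have := leeW_y2 1%R (-1)%R hjl; rewrite e leeW0.
  have hd : forall u, dotZ4 (F u) (ydef j l 1%R (-1)%R) = 0%R.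
    move=> u; rewrite dot_y GRing.mulr1 GRing.mulrN1; apply/eqP.
    by have := hall u; rewrite negbK.
  by have := proj3 _ hd hy0; rewrite leeW_y2 // leeZ4_m1.
have wc : forall w, weight_count C w = #|[set u | W F u == w]|.
  move=> w; rewrite /weight_count.
  have -> : [set x in C | leeW x == w] = F @: [set u | W F u == w].
    apply/setP => x; rewrite inE; apply/andP/imsetP => [[/FC [u ->] hw]|[u hu ->]].
      by exists u; rewrite // inE.
    by split; [apply/FC; exists u | move: hu; rewrite inE].
  by rewrite card_imset.
have us : uniq (lee_weights C) := undup_uniq _.
case e: (lee_weights C) hsize us => [|a [|b [|c s]]] // _.
move=> /andP [hab _]; rewrite inE in hab.
set p := minn a b; set q := maxn a b.
have hpq : (p < q)%N by rewrite /p /q; lia.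
have memab : forall w, w \in lee_weights C <-> w = p \/ w = q.
  move=> w; rewrite e !inE /p /q; split.
    by case/orP => /eqP ->; lia.
  by case => ->; apply/orP; lia.
have hw : forall u, u != 0%R -> W F u = p \/ W F u = q.
  by move=> u hu; apply/memab/lw; exists u.
have [up hup] : exists up, up != 0%R /\ W F up = p.
  by case: ((lw p).1 ((memab p).2 (or_introl erefl))) => u hu; exists u.
have [uq huq] : exists uq, uq != 0%R /\ W F uq = q.
  by case: ((lw q).1 ((memab q).2 (or_intror erefl))) => u hu; exists u.
have hpl : dL C = ((#|C| * n) %/ (#|C| - 1))%N := hplot.
have hD : forall u, u != 0%R ->
   ((#|{: ('rV['Z_4]_k1 * 'rV['Z_2]_k2)%type}| * n) %/
     (#|{: ('rV['Z_4]_k1 * 'rV['Z_2]_k2)%type}| - 1) <= W F u)%N.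
  move=> u hu; rewrite -cardC -hpl; apply: dLle; last by rewrite Fnz.
  by apply/FC; exists u.
case: (core Fadd hodd hpm hpq hw hup huq hD) => hp hN hA hQ hcnt.
case: (core2 Fadd hodd hpm hpq hup huq) => hDn hQpos.
rewrite cardG in hN hcnt hDn.
have hQq : Q F q = [set u | W F u == q] by [].
move: hA hQ hcnt hQpos; set A := #|Q F q| => hA hQ hcnt hQpos.
have hbq : bb n q = (q - n)%N by [].
have hnq : (n < q)%N by rewrite -hp.
move: (bb n q) hbq hA hN => bq hbq hA hN.
have hdiv : (A.+1 %| 2 ^ (2 * k1 + k2))%N.
  rewrite -hN; apply/dvdnP; exists (2 * bq)%N; rewrite -hA mulnS; ring.
have /(dvdn_pfactor _ _ (isT : prime 2)) [t htk hAt] := hdiv.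
have hkK : (k1 <= 2 * k1 + k2)%N by rewrite mul2n -addnn -addnA leq_addr.
have [ht hn hqv hAv hcv] := numeric hkK hnq hbq hA hQ hQpos hN hAt.
exists t; split.
- exact: ht.
- by rewrite hpl cardC cardG hDn; split.
- move=> w; have := memab w; rewrite hp => h; rewrite -hn -hqv; rewrite e in h; exact: h.
- by rewrite -hn wc -hcv; rewrite -hcnt -subnDA -addnA addnK.
by rewrite -hqv wc -hQq; exact: hAv.
Qed.
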